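(* Let $\Theta=(\theta_1,\dots,\theta_N)$ be a realisation of a Kuramoto stochastic block model (real-valued lifted phases) which is in synchronized steady state by time $t_{SS}$, let $\omega$ denote the common frequency $\dot\theta_i(t)$ for $t\ge t_{SS}$, and let $\Delta\theta_i=\theta_i(t_{SS})$. Let $e^{\imath\Theta}$ denote the complex path $t\mapsto(e^{\imath\theta_1(t)},\dots,e^{\imath\theta_N(t)})$. Then for every $T>0$, $M\ge 1$ and $I=(i_1,\dots,i_M)\in[N]^M$, $$S^{SS}_I(e^{\imath\Theta})(T)=\frac{\lambda_I}{M!}\left(e^{\imath\omega T}-1\right)^M,\qquad \lambda_I=e^{\imath\sum_{k=1}^M\Delta\theta_{i_k}},$$ and for all $i,j\in[N]$, $L^{SS}_{ij}(e^{\imath\Theta})(T)=0$.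
   Context: A Kuramoto stochastic block model (KSBM) realisation is a solution of $\dot\theta_i=\omega_i+\sum_j\widetilde C_{ij}\sin(\theta_j-\theta_i)$, $i\in[N]$, where the coupling matrix $\widetilde C$ is obtained from a stochastic block model adjacency matrix and the intrinsic frequencies $\omega_i$ are real numbers; phases are lifted to $\mathbb{R}$. The system is in synchronized steady state by time $t_{SS}$ if $\dot\theta_i(t)=\dot\theta_j(t)$ for all $i,j$ and all $t\ge t_{SS}$; this common value does not depend on $t$ and is denoted $\omega$, so that $\theta_i(t)=\omega(t-t_{SS})+\Delta\theta_i$ for $t\ge t_{SS}$. For a piecewise smooth path $\gamma:[a,b]\to\mathbb{C}^N$ and $I=(i_1,\dots,i_M)$, the path signature is $S_I(\gamma)=\int_{a<t_1<\dots<t_M<b}\dot\gamma_{i_1}(t_1)\cdots\dot\gamma_{i_M}(t_M)\,dt_1\cdots dt_M$; the lead matrix is $L_{ij}(\gamma)=\frac12(S_{(i,j)}(\gamma)-S_{(j,i)}(\gamma))$. Steady-state versions: $S^{SS}_I(\gamma)(T)=S_I(\gamma|_{[t_{SS},t_{SS}+T]})$, $L^{SS}_{ij}(\gamma)(T)=L_{ij}(\gamma|_{[t_{SS},t_{SS}+T]})$. *)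

(* Defs.v *)
From Stdlib Require Import Reals List Factorial.
From Coquelicot Require Import Coquelicot.
Open Scope R_scope.

Definition expi (x : R) : C := (cos x, sin x).

(* A path in C^N is a family of complex-valued functions of time,
   indexed by nat (only indices < N are used). *)
Definition cpath := nat -> R -> C.

Definition Cderiv (f : R -> C) (t : R) : C :=
  (Derive (fun s => fst (f s)) t, Derive (fun s => snd (f s)) t).

(* Iterated integral indexed by a REVERSED word:
   sig_rev g a [] t = 1,
   sig_rev g a (i :: l) t = \int_a^t sig_rev g a l s * g_i'(s) ds. *)
Fixpoint sig_rev (g : cpath) (a : R) (l : list nat) (t : R) : C :=
  match l with
  | nil => RtoC 1
  | i :: l' =>
      RInt (V := C_R_CompleteNormedModule)
        (fun s => Cmult (sig_rev g a l' s) (Cderiv (g i) s)) a t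
  end.

(* Path signature S_I(g|_[a,b]) for the word I = (i_1,...,i_M):
   \int_{a<t_1<...<t_M<b} g'_{i_1}(t_1) ... g'_{i_M}(t_M). *)
Definition signature (g : cpath) (a b : R) (I : list nat) : C :=
  sig_rev g a (rev I) b.

Definition lead (g : cpath) (a b : R) (i j : nat) : C :=
  Cmult (RtoC (/2)) (Cminus (signature g a b (i :: j :: nil))
                            (signature g a b (j :: i :: nil))).

Definition sig_SS (g : cpath) (tSS T : R) (I : list nat) : C :=
  signature g tSS (tSS + T) I.
Definition lead_SS (g : cpath) (tSS T : R) (i j : nat) : C :=
  lead g tSS (tSS + T) i j.

Definition kuramoto_solution (N : nat) (Cm : nat -> nat -> R) (w : nat -> R)
  (theta : nat -> R -> R) : Prop :=
  forall i t, (i < N)%nat ->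
    is_derive (theta i) t
      (w i + sum_f_R0 (fun j => Cm i j * sin (theta j t - theta i t)) (pred N)).

Definition sync_by (N : nat) (theta : nat -> R -> R) (tSS : R) : Prop :=
  forall i j t, (i < N)%nat -> (j < N)%nat -> tSS <= t ->
    Derive (theta i) t = Derive (theta j) t.

Definition expi_path (theta : nat -> R -> R) : cpath :=
  fun i t => expi (theta i t).

Definition lambdaI (dtheta : nat -> R) (I : list nat) : C :=
  expi (fold_right Rplus 0 (map dtheta I)).

(* Main.v *)
Require Import Defs.
From Stdlib Require Import Reals List Factorial Lra Lia.
From Coquelicot Require Import Coquelicot.
Open Scope R_scope.

Definition CD (f : R -> C) (x : R) (d : C) :=
  is_derive (fun s => fst (f s)) x (fst d) /\ is_derive (fun s => snd (f s)) x (snd d).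

Lemma isd_eq (f : R -> R) x d d' : is_derive f x d -> d = d' -> is_derive f x d'.
Proof. intros H <-; exact H. Qed.

Lemma CD_eq f x d d' : CD f x d -> d = d' -> CD f x d'.
Proof. intros H <-; exact H. Qed.

Lemma CD_ext f g x d : (forall s, f s = g s) -> CD f x d -> CD g x d.
Proof.
  intros E [H1 H2]; split.
  - eapply is_derive_ext; [|exact H1]; intro s; simpl; now rewrite E.
  - eapply is_derive_ext; [|exact H2]; intro s; simpl; now rewrite E.
Qed.

Lemma CD_const (c : C) x : CD (fun _ => c) x (RtoC 0).
Proof. split; simpl; apply (is_derive_const (K:=R_AbsRing) (V:=R_NormedModule)). Qed.
Lemma isd_mult (f g : R -> R) x df dg : is_derive f x df -> is_derive g x dg ->
  is_derive (fun s => f s * g s) x (df * g x + f x * dg).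
Proof. intros. apply (is_derive_mult (K:=R_AbsRing)); auto. intros; apply Rmult_comm. Qed.
Lemma isd_minus (f g : R -> R) x df dg : is_derive f x df -> is_derive g x dg ->
  is_derive (fun s => f s - g s) x (df - dg).
Proof. intros. exact (is_derive_minus (K:=R_AbsRing) (V:=R_NormedModule) f g x df dg H H0). Qed.
Lemma isd_plus (f g : R -> R) x df dg : is_derive f x df -> is_derive g x dg ->
  is_derive (fun s => f s + g s) x (df + dg).
Proof. intros. exact (is_derive_plus (K:=R_AbsRing) (V:=R_NormedModule) f g x df dg H H0). Qed.

Lemma CD_mult f g x df dg : CD f x df -> CD g x dg ->
  CD (fun s => Cmult (f s) (g s)) x (Cplus (Cmult df (g x)) (Cmult (f x) dg)).
Proof.
  intros [F1 F2] [G1 G2]; split; simpl.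
  - eapply isd_eq.
    + apply isd_minus; apply isd_mult; eauto.
    + cbv beta; simpl; ring.
  - eapply isd_eq.
    + apply isd_plus; apply isd_mult; eauto.
    + cbv beta; simpl; ring.
Qed.

Lemma CD_minus f g x df dg : CD f x df -> CD g x dg ->
  CD (fun s => Cminus (f s) (g s)) x (Cminus df dg).
Proof.
  intros [F1 F2] [G1 G2]; split; simpl.
  - eapply isd_eq.
    + apply isd_minus; eauto.
    + cbv beta; simpl; ring.
  - eapply isd_eq.
    + apply isd_minus; eauto.
    + cbv beta; simpl; ring.
Qed.

Lemma CD_pow f x df n : CD f x df ->
  CD (fun s => pow_n (f s) n) x (Cmult (Cmult (RtoC (INR n)) (pow_n (f x) (pred n))) df).
Proof.
  intro H. induction n as [|n IH].
  - simpl. eapply CD_eq; [apply CD_const|]. apply injective_projections; simpl; ring.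
  - eapply CD_eq; [apply (CD_mult f (fun s => pow_n (f s) n)); eauto|].
    destruct n as [|n].
    + simpl. apply injective_projections; simpl; ring.
    + simpl pred. rewrite (S_INR (S n)).
      change (pow_n (f x) (S n)) with (Cmult (f x) (pow_n (f x) n)).
      rewrite RtoC_plus. ring.
Qed.

Lemma CD_cont f x d : CD f x d ->
  continuous (fun s => fst (f s)) x /\ continuous (fun s => snd (f s)) x.
Proof.
  intros [H1 H2]; split.
  - apply (ex_derive_continuous (K:=R_AbsRing) (V:=R_NormedModule)); eexists; eauto.
  - apply (ex_derive_continuous (K:=R_AbsRing) (V:=R_NormedModule)); eexists; eauto.
Qed.

Lemma CD_E (om a x : R) :
  CD (fun s => expi (om * (s - a))) x (Cmult ((0, om) : C) (expi (om * (x - a)))).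
Proof.
  unfold expi; split; simpl; auto_derive; [exact I| |exact I|]; unfold Rminus; ring.
Qed.

Lemma conv (f : R -> C) a b (l1 l2 : R) :
  is_RInt (V:=prod_NormedModule R_AbsRing R_NormedModule R_NormedModule) f a b (l1,l2) ->
  is_RInt (V:=C_R_NormedModule) f a b (l1,l2).
Proof. intro H. exact H. Qed.

Lemma FTC_C (F f : R -> C) a b :
  (forall x, Rmin a b <= x <= Rmax a b -> CD F x (f x)) ->
  (forall x, Rmin a b <= x <= Rmax a b -> exists d, CD f x d) ->
  RInt (V:=C_R_CompleteNormedModule) f a b = Cminus (F b) (F a).
Proof.
  intros HF Hf. apply is_RInt_unique.
  replace (Cminus (F b) (F a)) with ((fst (F b) - fst (F a), snd (F b) - snd (F a)) : C)
    by (apply injective_projections; simpl; ring).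
  apply conv. apply is_RInt_fct_extend_pair.
  - apply (is_RInt_derive (V:=R_CompleteNormedModule) (fun s => fst (F s))).
    + intros x Hx; apply (HF x Hx).
    + intros x Hx; destruct (Hf x Hx) as [d Hd]; apply (CD_cont _ _ _ Hd).
  - apply (is_RInt_derive (V:=R_CompleteNormedModule) (fun s => snd (F s))).
    + intros x Hx; apply (HF x Hx).
    + intros x Hx; destruct (Hf x Hx) as [d Hd]; apply (CD_cont _ _ _ Hd).
Qed.

Lemma expi_plus x y : expi (x + y) = Cmult (expi x) (expi y).
Proof. unfold expi; rewrite cos_plus, sin_plus; apply injective_projections; simpl; ring. Qed.

Lemma expi_0 : expi 0 = RtoC 1.
Proof. unfold expi; rewrite cos_0, sin_0; reflexivity. Qed.

Lemma RtoC_neq0 x : x <> 0 -> RtoC x <> RtoC 0.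
Proof. intros H Hc. apply H. apply (f_equal fst) in Hc. exact Hc. Qed.

Lemma sig_closed (g : cpath) (a om : R) (D : nat -> R) (l : list nat) :
  (forall i, In i l -> forall s, a <= s ->
     Cderiv (g i) s = Cmult (Cmult ((0,om):C) (expi (D i))) (expi (om*(s-a)))) ->
  forall t, a <= t ->
  sig_rev g a l t =
  Cmult (Cdiv (expi (fold_right Rplus 0 (map D l))) (RtoC (INR (fact (length l)))))
        (pow_n (Cminus (expi (om*(t-a))) (RtoC 1)) (length l)).
Proof.
  induction l as [|i l IH]; intros H t Ht.
  - cbn [sig_rev map fold_right length fact]. rewrite expi_0.
    change (INR 1) with 1. change (pow_n (K:=C_Ring) (Cminus (expi (om * (t - a))) (RtoC 1)) 0) with (RtoC 1).
    field.
  - cbn [sig_rev map fold_right length].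
    set (m := length l).
    set (K := Cdiv (expi (fold_right Rplus 0 (map D l))) (RtoC (INR (fact m)))).
    assert (IH' : forall s, a <= s -> sig_rev g a l s = Cmult K (pow_n (Cminus (expi (om*(s-a))) (RtoC 1)) m)).
    { intros s Hs. apply IH; auto. intros j Hj; apply H; simpl; auto. }
    rewrite (RInt_ext (V:=C_R_CompleteNormedModule) _ (fun s => Cmult (Cmult K (pow_n (Cminus (expi (om*(s-a))) (RtoC 1)) m))
                                  (Cmult (Cmult ((0,om):C) (expi (D i))) (expi (om*(s-a)))))).
    2:{ intros x Hx. rewrite Rmin_left, Rmax_right in Hx by lra.
        rewrite IH' by lra. rewrite H; simpl; auto; lra. }
    rewrite (FTC_C (fun s => Cmult (Cdiv (Cmult K (expi (D i))) (RtoC (INR (S m))))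
                                   (pow_n (Cminus (expi (om*(s-a))) (RtoC 1)) (S m)))).
    + replace (om*(a-a)) with 0 by ring. rewrite expi_0.
      change (pow_n (K:=C_Ring) (Cminus (RtoC 1) (RtoC 1)) (S m)) with
        (Cmult (Cminus (RtoC 1) (RtoC 1)) (pow_n (K:=C_Ring) (Cminus (RtoC 1) (RtoC 1)) m)).
      rewrite expi_plus.
      change (fact (S m)) with (S m * fact m)%nat. rewrite mult_INR, RtoC_mult.
      unfold K. field. split; apply RtoC_neq0; [apply INR_fact_neq_0| apply not_0_INR; discriminate].
    + intros x _. eapply CD_eq.
      * apply CD_mult; [apply CD_const|]. apply CD_pow. apply CD_minus; [apply CD_E|apply CD_const].
      * cbn [pred]. field. apply RtoC_neq0. apply not_0_INR. discriminate.
    + intros x _. eexists. apply CD_mult.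
      * apply CD_mult; [apply CD_const|]. apply CD_pow. apply CD_minus; [apply CD_E|apply CD_const].
      * apply CD_mult; [apply CD_const|apply CD_E].
Qed.

Lemma fold_plus_init c (l : list R) : fold_right Rplus c l = c + fold_right Rplus 0 l.
Proof. induction l as [|x l IH]; simpl; [lra|]. rewrite IH; lra. Qed.

Lemma fold_plus_rev (l : list R) : fold_right Rplus 0 (rev l) = fold_right Rplus 0 l.
Proof.
  induction l as [|x l IH]; simpl; auto.
  rewrite fold_right_app. simpl. rewrite fold_plus_init, IH. lra.
Qed.

Lemma theta_lin (N : nat) (Cm : nat -> nat -> R) (w : nat -> R)
  (theta : nat -> R -> R) (tSS omega : R) :
  kuramoto_solution N Cm w theta ->
  sync_by N theta tSS ->
  (forall i, (i < N)%nat -> Derive (theta i) tSS = omega) ->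
  forall i t, (i < N)%nat -> tSS <= t ->
  Derive (theta i) t = omega /\ theta i t = theta i tSS + omega * (t - tSS).
Proof.
  intros Hk Hs H0.
  assert (exd : forall i t, (i < N)%nat -> ex_derive (theta i) t).
  { intros i t Hi. eexists. apply Hk; auto. }
  assert (Dval : forall i t, (i < N)%nat -> Derive (theta i) t =
     w i + sum_f_R0 (fun j => Cm i j * sin (theta j t - theta i t)) (pred N)).
  { intros i t Hi. apply is_derive_unique. apply Hk; auto. }
  assert (cont : forall i x, (i < N)%nat -> continuity_pt (theta i) x).
  { intros i x Hi. apply continuity_pt_filterlim.
    apply (ex_derive_continuous (K:=R_AbsRing) (V:=R_NormedModule)). auto. }
  assert (diff : forall i j t, (i < N)%nat -> (j < N)%nat -> tSS <= t ->
     theta j t - theta i t = theta j tSS - theta i tSS).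
  { intros i j t Hi Hj Ht.
    destruct (MVT_gen (fun s => theta j s - theta i s) tSS t
       (fun s => Derive (theta j) s - Derive (theta i) s)) as [c [Hc E]].
    - intros x Hx. apply isd_minus; apply Derive_correct; auto.
    - intros x Hx. apply continuity_pt_minus; auto.
    - rewrite Rmin_left in Hc by lra.
      rewrite (Hs j i c) in E by (auto; lra). lra. }
  assert (Dom : forall i t, (i < N)%nat -> tSS <= t -> Derive (theta i) t = omega).
  { intros i t Hi Ht. rewrite Dval by auto. rewrite <- (H0 i Hi), (Dval i tSS Hi).
    f_equal. apply sum_eq. intros j Hj. rewrite diff; auto; lia. }
  intros i t Hi Ht. split; [apply Dom; auto|].
  destruct (MVT_gen (theta i) tSS t (Derive (theta i))) as [c [Hc E]].
  - intros x Hx. apply Derive_correct; auto.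
  - intros x Hx. auto.
  - rewrite Rmin_left in Hc by lra. rewrite Dom in E by (auto; lra). lra.
Qed.

Theorem lemma18 (N : nat) (Cm : nat -> nat -> R) (w : nat -> R)
  (theta : nat -> R -> R) (tSS omega : R) :
  kuramoto_solution N Cm w theta ->
  sync_by N theta tSS ->
  (forall i, (i < N)%nat -> Derive (theta i) tSS = omega) ->
  forall T : R, 0 < T ->
  (forall I : list nat, (1 <= length I)%nat ->
     List.Forall (fun i => (i < N)%nat) I ->
     sig_SS (expi_path theta) tSS T I =
     Cmult (Cdiv (lambdaI (fun i => theta i tSS) I) (RtoC (INR (fact (length I)))))
           (pow_n (Cminus (expi (omega * T)) (RtoC 1)) (length I)))
  /\
  (forall i j, (i < N)%nat -> (j < N)%nat ->
     lead_SS (expi_path theta) tSS T i j = RtoC 0).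
Proof.
  intros Hk Hs H0 T HT.
  pose proof (theta_lin N Cm w theta tSS omega Hk Hs H0) as Hlin.
  set (D := fun i => theta i tSS).
  assert (HC : forall i, (i < N)%nat -> forall s, tSS <= s ->
     Cderiv (expi_path theta i) s =
     Cmult (Cmult ((0,omega):C) (expi (D i))) (expi (omega*(s-tSS)))).
  { intros i Hi s Hs'. destruct (Hlin i s Hi Hs') as [Hd Hl].
    assert (Hd' : is_derive (theta i) s omega).
    { rewrite <- Hd. apply Derive_correct. eexists. apply Hk; auto. }
    assert (E1 : Derive (fun s => cos (theta i s)) s = - sin (theta i s) * omega).
    { apply is_derive_unique. eapply isd_eq.
        - apply (is_derive_comp (K:=R_AbsRing) (V:=R_NormedModule) cos (theta i)).
          + apply is_derive_cos.
          + exact Hd'.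
        - unfold scal; simpl; unfold mult; simpl; ring. }
    assert (E2 : Derive (fun s => sin (theta i s)) s = cos (theta i s) * omega).
    { apply is_derive_unique. eapply isd_eq.
        - apply (is_derive_comp (K:=R_AbsRing) (V:=R_NormedModule) sin (theta i)).
          + apply is_derive_sin.
          + exact Hd'.
        - unfold scal; simpl; unfold mult; simpl; ring. }
    unfold Cderiv, expi_path. simpl fst; simpl snd. rewrite E1, E2.
    rewrite <- Cmult_assoc, <- expi_plus. unfold D. rewrite <- Hl.
    unfold expi; apply injective_projections; simpl; ring. }
  split.
  - intros I Hlen HF. unfold sig_SS, signature.
    rewrite (sig_closed _ tSS omega D (rev I)).
    + rewrite length_rev, map_rev, fold_plus_rev.
      replace (omega * (tSS + T - tSS)) with (omega * T) by ring. reflexivity.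
    + intros i Hi s Hs'. apply HC; auto.
      rewrite Forall_forall in HF. apply HF. apply in_rev; exact Hi.
    + lra.
  - intros i j Hi Hj. unfold lead_SS, lead, signature. cbn [rev app].
    assert (Hij : forall k, In k (j :: i :: nil) -> (k < N)%nat) by (intros k [<-|[<-|[]]]; auto).
    assert (Hji : forall k, In k (i :: j :: nil) -> (k < N)%nat) by (intros k [<-|[<-|[]]]; auto).
    rewrite (sig_closed _ tSS omega D (j :: i :: nil));
      [| intros k Hk' s Hs'; apply HC; [apply Hij; exact Hk' | exact Hs'] | lra].
    rewrite (sig_closed _ tSS omega D (i :: j :: nil));
      [| intros k Hk' s Hs'; apply HC; [apply Hji; exact Hk' | exact Hs'] | lra].
    cbn [map fold_right length].
    replace (D j + (D i + 0)) with (D i + (D j + 0)) by ring.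
    apply injective_projections; simpl; ring.
Qed.
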